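(* Let $q\ge1$ and $k\ge2$ be integers, and for $1\le t\le q$ let $\boldsymbol{\alpha}_t=(\alpha_{t,1},\dots,\alpha_{t,k})$ with $0<\alpha_{t,1},\dots,\alpha_{t,k}<1$ and $\alpha_{t,1}+\cdots+\alpha_{t,k}=1$. There exist constants $C,N$ depending only on $k$, $q$ and $(\boldsymbol\alpha_t)_{1\le t\le q}$ such that the following holds. For all integers $n\ge N$, $d\ge1$, all $g_1,\dots,g_{k-1}\in\mathbb{Z}$ and all integers $0\le i_1,\dots,i_q\le n$ with $i_1+\cdots+i_q=n$, $$\Bigg|\sum\prod_{t=1}^q P_{i_t,\mathbf{s}_t,\boldsymbol{\alpha}_t}-\frac{1}{d^{k-1}}\Bigg|\le C\,\frac{\log n}{\sqrt n},$$ where the sum is over all integer vectors $\mathbf{s}_t=(s_{t,1},\dots,s_{t,k})$, $1\le t\le q$, with $0\le s_{t,1},\dots,s_{t,k}\le i_t$, $s_{t,1}+\cdots+s_{t,k}=i_t$ for every $t$, and $s^{(a)}\equiv g_a\pmod d$ for $a=1,\dots,k-1$, with $s^{(a)}:=s_{1,a}+\cdots+s_{q,a}$.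
   Context: For nonnegative integers $n,u_1,\dots,u_k$ with $u_1+\cdots+u_k=n$, $\mathbf{u}=(u_1,\dots,u_k)$ and $\boldsymbol\alpha=(\alpha_1,\dots,\alpha_k)$, $P_{n,\mathbf{u},\boldsymbol\alpha}:=\frac{n!}{u_1!\cdots u_k!}\alpha_1^{u_1}\cdots\alpha_k^{u_k}$ (the multinomial coefficient being $1$ when $n=0$). *)

(* Defs.v *)
From HB Require Import structures.
From mathcomp Require Import all_boot all_order all_algebra.
From mathcomp Require Import all_classical all_reals all_analysis.
Set Implicit Arguments. Unset Strict Implicit. Unset Printing Implicit Defensive.
Import Order.TTheory GRing.Theory Num.Theory.
Local Open Scope ring_scope.

Definition Pmult (R : realType) (k n : nat) (u : 'I_k -> nat) (alpha : 'I_k -> R) : R :=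
  (n`!)%:R / (\prod_(j < k) (u j)`!)%:R * \prod_(j < k) alpha j ^+ u j.

(* Main.v *)
Require Import Defs.
From HB Require Import structures.
From mathcomp Require Import all_boot all_order all_algebra.
From mathcomp Require Import all_classical all_reals all_analysis.
From mathcomp Require Import ring lra zify.
Import Order.TTheory GRing.Theory Num.Theory.
Local Open Scope ring_scope.

Lemma le_of_eq {R : realType} (x y : R) : x = y -> x <= y.
Proof. by move->. Qed.

Lemma amgm {R : realType} (y c : R) : 0 < c -> `|y| <= (y ^+ 2 / c + c) / 2.
Proof.
move=> hc.
have e2 : `|y| ^+ 2 = y ^+ 2 by rewrite real_normK // num_real.
rewrite -e2.
have E : (`|y| ^+ 2 / c + c) / 2 - `|y| = c^-1 * (`|y| - c) ^+ 2 / 2.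
  by field; rewrite gt_eqF.
have h : 0 <= c^-1 * (`|y| - c) ^+ 2 / 2.
  by apply: divr_ge0 => //; apply: mulr_ge0; [rewrite invr_ge0 ltW|apply: sqr_ge0].
lra.
Qed.

Lemma abel {R : realType} (b D S : nat -> R) N : S 0%N = 0 -> (forall j, S j.+1 = S j + D j) ->
  \sum_(j < N) b j * D j = \sum_(j < N) (b j - b j.+1) * S j.+1 + b N * S N.
Proof.
move=> S0 SS; elim: N => [|N IH]; first by rewrite !big_ord0 S0 mulr0 addr0.
rewrite !big_ord_recr /= IH (SS N).
ring.
Qed.

Lemma abel_bound {R : realType} (b D S : nat -> R) N : S 0%N = 0 -> (forall j, S j.+1 = S j + D j) ->
  (forall j, `|S j| <= 1) ->
  `|\sum_(j < N) b j * D j| <= \sum_(j < N) `|b j - b j.+1| + `|b N|.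
Proof.
move=> S0 SS S1; rewrite (abel b D S N S0 SS).
apply: le_trans (ler_normD _ _) _; apply: lerD.
  apply: le_trans (ler_norm_sum _ _ _) _; apply: ler_sum => j _.
  by rewrite normrM; apply: ler_piMr.
by rewrite normrM; apply: ler_piMr.
Qed.

Section Count.
Variable R : realType.
Variables (d r : nat).
Hypothesis hd : (0 < d)%N.
Hypothesis hr : (r < d)%N.

Definition cS (J : nat) : R := ((r < J %% d)%N : nat)%:R - (J %% d)%:R / d%:R.
Definition cD (l : nat) : R := ((l %% d == r)%N : nat)%:R - 1 / d%:R.

Lemma cS0 : cS 0 = 0.
Proof. by rewrite /cS mod0n ltn0 mul0r subr0. Qed.

Lemma cSS J : cS J.+1 = cS J + cD J.
Proof.
have hd0 : d%:R != 0 :> R by rewrite pnatr_eq0 -lt0n.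
have hj := ltn_pmod J hd.
have e : (J.+1 %% d = (J %% d).+1 %% d)%N by rewrite -addn1 -modnDml addn1.
rewrite /cS /cD e; move: hj; set j := (J %% d)%N => hj.
case: (ltnP j.+1 d) => hj1.
  rewrite modn_small // -natr1.
  case: (ltngtP r j) => h.
  - by rewrite ltnS (ltnW h) /=; field.
  - by rewrite ltnS leqNgt h /=; field.
  - by rewrite h ltnS leqnn /=; field.
have ed : j.+1 = d by apply/eqP; rewrite eqn_leq hj hj1.
rewrite ed modnn ltn0 /=.
have -> : j%:R = d%:R - 1 :> R by rewrite -ed -natr1 addrK.
case: (ltngtP r j) => h.
- by rewrite /=; field.
- by move: hr; rewrite -ed ltnS leqNgt h.
- by rewrite /=; field.
Qed.

Lemma cS_le1 J : `|cS J| <= 1.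
Proof.
have hd0 : 0 < d%:R :> R by rewrite ltr0n.
have hj := ltn_pmod J hd.
have h1 : 0 <= (J %% d)%:R / d%:R :> R by apply: divr_ge0.
have h2 : (J %% d)%:R / d%:R <= 1 :> R.
  by rewrite ler_pdivrMr // mul1r ler_nat ltnW.
rewrite /cS; case: (r < J %% d)%N => /=; rewrite ler_norml; apply/andP; split; lra.
Qed.

End Count.

Section Binom.
Variable R : realType.
Variable p : R.
Hypothesis hp : 0 < p < 1.

Definition bb (m x : nat) : R := ('C(m, x))%:R * p ^+ x * (1 - p) ^+ (m - x).

Lemma hp0 : 0 < p. Proof. by case/andP: hp. Qed.
Lemma hq0 : 0 < 1 - p. Proof. case/andP: hp => _ h; by rewrite subr_gt0. Qed.

Lemma bb_ge0 m x : 0 <= bb m x.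
Proof.
rewrite /bb; apply: mulr_ge0; first apply: mulr_ge0 => //.
  by apply: exprn_ge0; apply: ltW; apply: hp0.
by apply: exprn_ge0; apply: ltW; apply: hq0.
Qed.

Lemma bb_out m x : (m < x)%N -> bb m x = 0.
Proof. by move=> h; rewrite /bb bin_small // mul0r mul0r. Qed.

Definition Rs m (f : nat -> R) := \sum_(i < m.+1) bb m i * f i.

Lemma Rs_ext m f g : (forall i, f i = g i) -> Rs m f = Rs m g.
Proof. by move=> h; apply: eq_bigr => i _; rewrite h. Qed.

Lemma Rs_rec m f : Rs m.+1 f = p * Rs m (fun i => f i.+1) + (1 - p) * Rs m f.
Proof.
rewrite /Rs big_ord_recl.
under eq_bigr => i _ do rewrite lift0.
rewrite [X in _ = _ + (1 - p) * X]big_ord_recl.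
under [X in _ = _ + (1 - p) * (_ + X)]eq_bigr => i _ do rewrite lift0.
rewrite !mulr_sumr.
have -> : \sum_(i < m.+1) bb m.+1 i.+1 * f i.+1 =
   \sum_(i < m.+1) p * (bb m i * f i.+1) +
   \sum_(i < m.+1) ('C(m, i.+1))%:R * p ^+ i.+1 * (1 - p) ^+ (m - i) * f i.+1.
  rewrite -big_split; apply: eq_bigr => i _ /=.
  rewrite /bb binS natrD subSS.
  rewrite !exprS; ring.
rewrite [\sum_(i < m.+1) 'C(m, i.+1)%:R * _ * _ * _]big_ord_recr /= bin_small // mul0r mul0r mul0r addr0.
have -> : \sum_(i < m) ('C(m, i.+1))%:R * p ^+ i.+1 * (1 - p) ^+ (m - i) * f i.+1 =
   \sum_(i < m) (1 - p) * (bb m i.+1 * f i.+1).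
  apply: eq_bigr => i _; rewrite /bb.
  have -> : (m - i = (m - i.+1).+1)%N by rewrite subnSK.
  rewrite [(1 - p) ^+ (_.+1)]exprS; ring.
rewrite /bb !bin0 !subn0 !expr0 exprS mulrDr mulr_sumr.
set S1 := \sum_(i < m.+1) _. set S2 := \sum_(i < m) _. ring.
Qed.

Lemma Rs_poly m a b c :
  Rs m (fun i => a + b * i%:R + c * (i%:R) ^+ 2) =
  a + b * (m%:R * p) + c * (m%:R * p * (1 - p) + (m%:R * p) ^+ 2).
Proof.
elim: m a b c => [|m IH] a b c.
  rewrite /Rs big_ord1 /bb bin0 !expr0 /=; ring.
rewrite (Rs_rec m).
rewrite (Rs_ext _ _ (fun i => (a + b + c) + (b + 2 * c) * i%:R + c * (i%:R) ^+ 2)); last first.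
  by move=> i; rewrite -natr1; ring.
rewrite !IH -natr1; ring.
Qed.

Lemma Rs1 m : Rs m (fun _ => 1) = 1.
Proof.
rewrite (Rs_ext _ _ (fun i => 1 + 0 * i%:R + 0 * (i%:R) ^+ 2)); last by move=> i; ring.
by rewrite Rs_poly; ring.
Qed.

Lemma Rs_var m : Rs m (fun i => (m%:R * p - i%:R) ^+ 2) = m%:R * p * (1 - p).
Proof.
rewrite (Rs_ext _ _ (fun i => (m%:R * p) ^+ 2 + (- 2 * m%:R * p) * i%:R + 1 * (i%:R) ^+ 2)); last by move=> i; ring.
by rewrite Rs_poly; ring.
Qed.

Lemma Rs_le m f g : (forall i, f i <= g i) -> Rs m f <= Rs m g.
Proof. by move=> h; apply: ler_sum => i _; apply: ler_wpM2l; [apply: bb_ge0|]. Qed.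

Lemma Rs_lin m a b f g : Rs m (fun i => a * f i + b * g i) = a * Rs m f + b * Rs m g.
Proof.
by rewrite /Rs !mulr_sumr -big_split; apply: eq_bigr => i _ /=; ring.
Qed.


Lemma bb_diff m i : (m.+1)%:R * p * (1 - p) * (bb m i.+1 - bb m i) =
  bb m.+1 i.+1 * ((m.+1)%:R * p - (i.+1)%:R).
Proof.
case: (ltngtP i m) => him.
- have e1 : (m - i = (m - i.+1).+1)%N by rewrite subnSK.
  rewrite /bb subSS e1 !exprS.
  have H1 := congr1 (fun n => n%:R : R) (mul_bin_diag m.+1 i).
  rewrite /= !natrM in H1.
  rewrite binS natrD; rewrite binS natrD in H1.
  apply: subr0_eq.
  transitivity (p * p ^+ i * (1 - p) * (1 - p) ^+ (m - i.+1) *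
     ((i.+1)%:R * ('C(m, i.+1)%:R + 'C(m, i)%:R) - (m.+1)%:R * 'C(m, i)%:R)); first by ring.
  by rewrite H1 subrr mulr0.
- have h1 : bb m i.+1 = 0 by apply: bb_out; rewrite ltnS ltnW.
  have h2 : bb m i = 0 by apply: bb_out.
  have h3 : bb m.+1 i.+1 = 0 by apply: bb_out.
  by rewrite h1 h2 h3 subrr mulr0 mul0r.
- rewrite him bb_out // /bb !binn !subnn !expr0 exprS; ring.
Qed.

Lemma bb_shift m x : (x <= m)%N -> (m.+1)%:R * (1 - p) * bb m x = (m.+1 - x)%:R * bb m.+1 x.
Proof.
move=> hx.
have H := congr1 (fun n => n%:R : R) (mul_bin_down m.+1 x).
rewrite /= !natrM in H.
rewrite /bb [in (1 - p) ^+ (m.+1 - x)](subSn hx) exprS.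
apply: (@eq_trans _ _ ((m.+1)%:R * 'C(m, x)%:R * (p ^+ x * (1 - p) * (1 - p) ^+ (m - x)))); first by ring.
rewrite H; ring.
Qed.

Lemma BL m d r : (0 < d)%N -> (r < d)%N ->
  `|\sum_(x < m.+1) bb m x * ((x %% d == r)%N : nat)%:R - 1 / d%:R| <=
  1 / (p * (1 - p) * Num.sqrt (m.+1)%:R).
Proof.
move=> hd hr.
have hp0 := hp0; have hq0 := hq0.
set c := Num.sqrt (m.+1)%:R.
have hc : 0 < c by rewrite sqrtr_gt0 ltr0n.
have hc2 : c ^+ 2 = (m.+1)%:R by rewrite sqr_sqrtr // ler0n.
have E : \sum_(x < m.+1) bb m x * ((x %% d == r)%N : nat)%:R - 1 / d%:R =
         \sum_(x < m.+1) bb m x * cD R d r x.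
  have S1 : \sum_(x < m.+1) bb m x = 1 by rewrite -(Rs1 m) /Rs; apply: eq_bigr => x _; rewrite mulr1.
  symmetry; rewrite /cD; under eq_bigr => x _ do rewrite mulrBr.
  by rewrite sumrB -mulr_suml S1 !mul1r.
rewrite E.
apply: le_trans (abel_bound (bb m) (cD R d r) (cS R d r) m.+1 (@cS0 R d r) (@cSS R d r hd hr) (@cS_le1 R d r hd)) _.
rewrite bb_out // normr0 addr0.
set K := (m.+1)%:R * p * (1 - p).
have hK : 0 < K by rewrite /K !mulr_gt0 // ltr0n.
have E2 : forall j, `|bb m j - bb m j.+1| = bb m.+1 j.+1 * `|(m.+1)%:R * p - (j.+1)%:R| / K.
  move=> j; rewrite distrC.
  have := bb_diff m j; rewrite -/K => h.
  have -> : bb m j.+1 - bb m j = bb m.+1 j.+1 * ((m.+1)%:R * p - (j.+1)%:R) / K.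
    by rewrite -h; field; rewrite gt_eqF.
  by rewrite normrM normrM (ger0_norm (bb_ge0 _ _)) (gtr0_norm (x := K^-1)) ?invr_gt0.
under eq_bigr => j _ do rewrite E2.
rewrite -mulr_suml.
have H3 : \sum_(j < m.+1) bb m.+1 j.+1 * `|(m.+1)%:R * p - (j.+1)%:R| <=
          Rs m.+1 (fun i => `|(m.+1)%:R * p - i%:R|).
  rewrite /Rs [in X in _ <= X]big_ord_recl; under [X in _ <= _ + X]eq_bigr => j _ do rewrite lift0.
  by apply: ler_wpDl; [apply: mulr_ge0; [apply: bb_ge0|] |].
have H4 : Rs m.+1 (fun i => `|(m.+1)%:R * p - i%:R|) <= c.
  apply: le_trans (Rs_le m.+1 _ (fun i => (1 / (2 * c)) * ((m.+1)%:R * p - i%:R) ^+ 2 + (c / 2) * 1) _) _.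
    move=> i; apply: le_trans (@amgm R _ c hc) _; apply: le_of_eq.
    by field; rewrite gt_eqF.
  rewrite Rs_lin Rs_var Rs1.
  have hX : (m.+1)%:R * p * (1 - p) <= c ^+ 2.
    rewrite hc2; have : 0 < (m.+1)%:R :> R by rewrite ltr0n.
    move=> h0; have : p * (1 - p) <= 1 by nra.
    nra.
  have h5 : 1 / (2 * c) * ((m.+1)%:R * p * (1 - p)) <= 1 / (2 * c) * c ^+ 2.
    by apply: ler_wpM2l => //; apply: divr_ge0 => //; apply: mulr_ge0 => //; apply: ltW.
  have h6 : 1 / (2 * c) * c ^+ 2 = c / 2 by field; rewrite gt_eqF.
  lra.
have H5 := le_trans H3 H4.
apply: le_trans (_ : c / K <= _).
  by apply: ler_wpM2r => //; rewrite invr_ge0 ltW.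
apply: le_of_eq.
rewrite /K -hc2; field.
by rewrite !gt_eqF.
Qed.

Lemma S1 m : \sum_(x < m.+1) bb m x = 1.
Proof. by rewrite -(Rs1 m) /Rs; apply: eq_bigr => x _; rewrite mulr1. Qed.

Lemma Ebound m : \sum_(x < m.+1) bb m x / Num.sqrt ((m - x).+1)%:R <=
   1 / ((1 - p) * Num.sqrt (m.+1)%:R).
Proof.
have hp0 := hp0; have hq0 := hq0.
set c := Num.sqrt (m.+1)%:R.
have hc : 0 < c by rewrite sqrtr_gt0 ltr0n.
have hc2 : c ^+ 2 = (m.+1)%:R by rewrite sqr_sqrtr // ler0n.
have step1 : forall x : 'I_m.+1, bb m x / Num.sqrt ((m - x).+1)%:R <=
    1 / (2 * c) * bb m x + c / 2 * (bb m.+1 x / ((m.+1)%:R * (1 - p))).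
  move=> x.
  have hx : (x <= m)%N by rewrite -ltnS ltn_ord.
  set y := ((m - x).+1)%:R : R.
  have hy : 0 < y by rewrite ltr0n.
  set sy := Num.sqrt y.
  have hsy : 0 < sy by rewrite sqrtr_gt0.
  have hsy2 : sy ^+ 2 = y by rewrite sqr_sqrtr // ltW.
  have h1 : 1 / sy <= 1 / (2 * c) + c / (2 * y).
    have := @amgm R (1 / sy) (1 / c) (divr_gt0 ltr01 hc).
    rewrite ger0_norm; last by apply: divr_ge0 => //; apply: ltW.
    move=> h; apply: le_trans h _.
    apply: le_of_eq.
    rewrite -hsy2; field; by rewrite !gt_eqF.
  have e : bb m.+1 x / ((m.+1)%:R * (1 - p)) = bb m x / y.
    have := bb_shift m x hx; rewrite (subSn hx) -/y => h.
    apply: (@mulIf _ ((m.+1)%:R * (1 - p) * y)).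
      by rewrite !mulf_neq0 ?gt_eqF ?ltr0n.
    transitivity (y * bb m.+1 x); first by field; rewrite !gt_eqF ?ltr0n.
    rewrite -h; field; by rewrite gt_eqF.
  rewrite e.
  have hb := bb_ge0 m x.
  apply: le_trans (_ : bb m x * (1 / (2 * c) + c / (2 * y)) <= _).
    apply: le_trans (_ : bb m x * (1 / sy) <= _); first by rewrite mul1r lexx.
    by apply: ler_wpM2l.
  apply: le_of_eq; field; by rewrite !gt_eqF.
apply: le_trans (ler_sum _ (fun x _ => step1 x)) _.
rewrite big_split /= -!mulr_sumr S1 mulr1.
have h3 : \sum_(x < m.+1) bb m.+1 x / ((m.+1)%:R * (1 - p)) <= 1 / ((m.+1)%:R * (1 - p)).
  rewrite -mulr_suml; apply: ler_wpM2r; first by rewrite invr_ge0 mulr_ge0 ?ltW // ltr0n.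
  rewrite -(S1 m.+1) [X in _ <= X]big_ord_recr /=.
  by apply: ler_wpDr => //; apply: bb_ge0.
have h4 : c / 2 * (\sum_(x < m.+1) bb m.+1 x / ((m.+1)%:R * (1 - p))) <=
          c / 2 * (1 / ((m.+1)%:R * (1 - p))).
  by apply: ler_wpM2l => //; apply: divr_ge0 => //; apply: ltW.
apply: le_trans (lerD (lexx _) h4) _.
rewrite -hc2.
have h5 : 1 / (2 * c) + c / 2 * (1 / (c ^+ 2 * (1 - p))) = (1 + 1 / (1 - p)) / (2 * c).
  by field; rewrite !gt_eqF.
rewrite h5.
have h6 : 1 <= 1 / (1 - p).
  rewrite ler_pdivlMr // mul1r; lra.
have h7 : 1 / ((1 - p) * c) = (1 / (1 - p) + 1 / (1 - p)) / (2 * c).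
  by field; rewrite !gt_eqF.
rewrite h7; apply: ler_wpM2r; first by rewrite invr_ge0 mulr_ge0 ?ltW.
lra.
Qed.

End Binom.

Arguments bb {R}.
Arguments bb_out {R}.
Arguments bb_ge0 {R}.
Arguments BL {R}.
Arguments Ebound {R}.
Arguments S1 {R}.

Definition fcons {T : finType} {n : nat} (x : T) (f : {ffun 'I_n -> T}) : {ffun 'I_n.+1 -> T} :=
  [ffun j => if unlift ord0 j is Some j' then f j' else x].

Lemma fcons0 {T : finType} {n : nat} (x : T) (f : {ffun 'I_n -> T}) : fcons x f ord0 = x.
Proof. by rewrite /fcons ffunE unlift_none. Qed.

Lemma fconsS {T : finType} {n : nat} (x : T) (f : {ffun 'I_n -> T}) j : fcons x f (lift ord0 j) = f j.
Proof. by rewrite /fcons ffunE liftK. Qed.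

Lemma sum_ffunS {R : realType} {T : finType} {n : nat} (F : {ffun 'I_n.+1 -> T} -> R) :
  \sum_(f : {ffun 'I_n.+1 -> T}) F f = \sum_(x : T) \sum_(f : {ffun 'I_n -> T}) F (fcons x f).
Proof.
rewrite pair_big /=.
pose g (f : {ffun 'I_n.+1 -> T}) := (f ord0, [ffun j => f (lift ord0 j)]).
rewrite (reindex (fun p : T * {ffun 'I_n -> T} => fcons p.1 p.2)) /=; last first.
  exists g => [[x f] _ | f _]; rewrite /g /=.
    by rewrite fcons0; congr pair; apply/ffunP => j; rewrite ffunE fconsS.
  apply/ffunP => j; case: (unliftP ord0 j) => [j'|] ->.
    by rewrite fconsS ffunE.
  by rewrite fcons0.
by apply: eq_bigr => [[x f]].
Qed.

Lemma sum_ffun0 {R : realType} {T : finType} (x0 : T) (F : {ffun 'I_0 -> T} -> R) :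
  \sum_(f : {ffun 'I_0 -> T}) F f = F [ffun=> x0].
Proof.
apply: big_pred1 => f /=; symmetry; apply/eqP/ffunP => -[] m i; by have := i; rewrite ltn0.
Qed.

Lemma forall_ordS k (P : 'I_k.+1 -> bool) :
  [forall a, P a] = P ord0 && [forall a : 'I_k, P (lift ord0 a)].
Proof.
apply/forallP/andP => [H | [H0 /forallP H] a].
  by split; [apply: H | apply/forallP => a; apply: H].
by case: (unliftP ord0 a) => [a'|] ->.
Qed.

Lemma widen_lift k (a : 'I_k) (h1 : (k.+1 <= k.+2)%N) (h2 : (k <= k.+1)%N) :
  widen_ord h1 (lift ord0 a) = lift ord0 (widen_ord h2 a).
Proof. by apply: val_inj. Qed.

Lemma widen0 k (h1 : (k.+1 <= k.+2)%N) : widen_ord h1 (ord0 : 'I_k.+1) = ord0.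
Proof. by apply: val_inj. Qed.

Lemma Pmult_ge0 {R : realType} k m (u : 'I_k -> nat) (alpha : 'I_k -> R) :
  (forall j, 0 <= alpha j) -> 0 <= Pmult m u alpha.
Proof.
move=> h; rewrite /Pmult; apply: mulr_ge0; first by apply: divr_ge0.
by apply: prodr_ge0 => j _; apply: exprn_ge0.
Qed.

Lemma Pmult_split {R : realType} k m (v : 'I_k.+1 -> nat) (alpha : 'I_k.+1 -> R) :
  (\sum_j v j)%N = m -> alpha ord0 != 1 ->
  Pmult m v alpha = bb (alpha ord0) m (v ord0) *
     Pmult (m - v ord0) (fun j => v (lift ord0 j)) (fun j => alpha (lift ord0 j) / (1 - alpha ord0)).
Proof.
rewrite big_ord_recl => <- ha.
set x := v ord0; set s := (\sum_(i < k) v (lift ord0 i))%N.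
have hq : 1 - alpha ord0 != 0 by rewrite subr_eq0 eq_sym.
rewrite addKn /Pmult /bb.
rewrite -(bin_fact (leq_addr s x)) addKn.
rewrite !big_ord_recl.
rewrite [in RHS](eq_bigr (fun j => alpha (lift ord0 j) ^+ v (lift ord0 j) * (1 - alpha ord0)^-1 ^+ v (lift ord0 j))); last by move=> j _; rewrite exprMn.
rewrite big_split /= prodrXr -/s.
have hP : (\prod_(i < k) (v (lift ord0 i))`!)%:R != 0 :> R.
  by rewrite pnatr_eq0 -lt0n prodn_gt0 // => i; rewrite fact_gt0.
have hx : (x`!)%:R != 0 :> R by rewrite pnatr_eq0 -lt0n fact_gt0.
have hs : (s`!)%:R != 0 :> R by rewrite pnatr_eq0 -lt0n fact_gt0.
rewrite !natrM exprVn.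
set P := (\prod_(i < k) (v (lift ord0 i))`!)%:R.
set A := \prod_(i < k) alpha (lift ord0 i) ^+ v (lift ord0 i).
field.
by rewrite expf_neq0 // hP hx.
Qed.

Lemma Pmult_ext {R : realType} k m (u v : 'I_k -> nat) (alpha : 'I_k -> R) :
  (forall j, u j = v j) -> Pmult m u alpha = Pmult m v alpha.
Proof.
move=> h; rewrite /Pmult; congr (_ / _ * _).
  by congr (_%:R); apply: eq_bigr => j _; rewrite h.
by apply: eq_bigr => j _; rewrite h.
Qed.

Definition Fk {R : realType} (k B m : nat) (alpha : 'I_k -> R) (d : nat) (h : 'I_k.-1 -> int) : R :=
  \sum_(u : {ffun 'I_k -> 'I_B.+1} | ((\sum_(j < k) (u j : nat))%N == m) &&
        [forall a : 'I_k.-1, (((u (widen_ord (leq_pred k) a) : nat))%:Z == h a %[mod (d%:Z)])%Z])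
     Pmult m (fun j => (u j : nat)) alpha.

Lemma sum_fcons {n B : nat} (x : 'I_B.+1) (f : {ffun 'I_n -> 'I_B.+1}) :
  (\sum_(j < n.+1) (fcons x f j : nat) = x + \sum_(j < n) (f j : nat))%N.
Proof. by rewrite big_ord_recl fcons0; congr (_ + _)%N; apply: eq_bigr => j _; rewrite fconsS. Qed.

Lemma forall_fcons {k B : nat} (x : 'I_B.+1) (f : {ffun 'I_k.+1 -> 'I_B.+1}) (d : nat) (h : 'I_k.+1 -> int) :
  [forall a : 'I_k.+1, (((fcons x f (widen_ord (leq_pred k.+2) a) : nat))%:Z == h a %[mod (d%:Z)])%Z] =
  ((x : nat)%:Z == h ord0 %[mod (d%:Z)])%Z &&
  [forall a : 'I_k, (((f (widen_ord (leq_pred k.+1) a) : nat))%:Z == h (lift ord0 a) %[mod (d%:Z)])%Z].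
Proof.
rewrite forall_ordS widen0 fcons0; congr (_ && _).
by apply: eq_forallb => a; rewrite (widen_lift _ _ _ (leq_pred k.+1)) fconsS.
Qed.

Lemma Fk_dec {R : realType} k B m (alpha : 'I_k.+2 -> R) d (h : 'I_k.+1 -> int) :
  alpha ord0 != 1 ->
  Fk k.+2 B m alpha d h = \sum_(x < B.+1)
     ((((x : nat)%:Z == h ord0 %[mod d%:Z])%Z : nat)%:R * bb (alpha ord0) m x *
      Fk k.+1 B (m - x) (fun j => alpha (lift ord0 j) / (1 - alpha ord0)) d (fun a => h (lift ord0 a))).
Proof.
move=> ha.
rewrite /Fk big_mkcond sum_ffunS; apply: eq_bigr => x _.
rewrite mulr_sumr [RHS]big_mkcond; apply: eq_bigr => f _ /=.
rewrite sum_fcons forall_fcons.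
case: (((x : nat)%:Z == h ord0 %[mod d%:Z])%Z) => /=; last by rewrite andbF !mul0r; case: ifP.
rewrite mul1r.
case: (leqP x m) => hxm.
  have -> : ((x + \sum_(j < k.+1) (f j : nat)) == m)%N = ((\sum_(j < k.+1) (f j : nat)) == m - x)%N.
    by rewrite -{1}(subnKC hxm) eqn_add2l.
  case: ifP => [/andP [/eqP hs _] | _] //.
  rewrite (Pmult_split _ _ (fun j => (fcons x f j : nat))) //; last by rewrite sum_fcons hs subnKC.
  rewrite fcons0; congr (_ * _); apply: Pmult_ext => j; by rewrite fconsS.
rewrite bb_out // mul0r.
have -> : ((x + \sum_(j < k.+1) (f j : nat)) == m)%N = false.
  by apply/negbTE; rewrite neq_ltn; apply/orP; right; apply: (leq_trans hxm); apply: leq_addr.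
by rewrite /=; case: ifP.
Qed.

Lemma modeq1 (a b : int) : (a == b %[mod (1%N)%:Z])%Z = true.
Proof. by rewrite !modz1. Qed.

Lemma cong_nat (x : nat) (h : int) d : (0 < d)%N ->
  ((x%:Z == h %[mod d%:Z])%Z) = ((x %% d)%N == `|(h %% d%:Z)%Z|%N).
Proof.
move=> hd.
rewrite modz_nat.
have := modz_ge0 h (d := d%:Z); rewrite eqz_nat -lt0n hd => /(_ isT) h0.
by rewrite -{1}(gez0_abs h0) eqz_nat.
Qed.

Lemma rlt (h : int) d : (0 < d)%N -> (`|(h %% d%:Z)%Z|%N < d)%N.
Proof.
move=> hd. have h0 := modz_ge0 h (d := d%:Z). rewrite eqz_nat -lt0n hd in h0.
have := ltz_pmod h (d := d%:Z). rewrite ltz_nat hd => /(_ isT).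
by rewrite -{1}(gez0_abs (h0 isT)) ltz_nat.
Qed.

Lemma forall_ord0 (P : 'I_0 -> bool) : [forall a, P a] = true.
Proof. by apply/forallP => -[]. Qed.

Lemma sum_widen {R : realType} B m (F : nat -> R) : (m <= B)%N -> (forall x, (m < x)%N -> F x = 0) ->
  \sum_(x < B.+1) F x = \sum_(x < m.+1) F x.
Proof.
move=> hm hF.
rewrite [RHS](big_ord_widen B.+1 F) // [RHS]big_mkcond; apply: eq_bigr => x _.
by case: ifP => // /negbT; rewrite -leqNgt => h; rewrite hF.
Qed.

Lemma Fk1 {R : realType} B m (alpha : 'I_1 -> R) d h : (m <= B)%N -> Fk 1 B m alpha d h = alpha ord0 ^+ m.
Proof.
move=> hm. rewrite /Fk big_mkcond sum_ffunS.
under eq_bigr => x _ do rewrite (sum_ffun0 x) big_ord1 fcons0 forall_ord0 andbT.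
rewrite -big_mkcond /=.
have hm' : (m < B.+1)%N by [].
rewrite (big_pred1 (Ordinal hm')); last by move=> x /=; rewrite -val_eqE.
rewrite /Pmult !big_ord1 fcons0 /= divff ?mul1r // pnatr_eq0 -lt0n fact_gt0.
Qed.

Lemma valid_tail {R : realType} k (alpha : 'I_k.+2 -> R) :
  (forall j, 0 < alpha j) -> \sum_j alpha j = 1 ->
  [/\ 0 < alpha ord0 < 1,
      forall j, 0 < alpha (lift ord0 j) / (1 - alpha ord0) &
      \sum_j (alpha (lift ord0 j) / (1 - alpha ord0)) = 1].
Proof.
move=> hpos hsum.
have hrest : 0 < \sum_(j < k.+1) alpha (lift ord0 j).
  rewrite big_ord_recl; apply: ltr_wpDr; last exact: hpos.
  by apply: sumr_ge0 => j _; apply: ltW.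
have e : alpha ord0 = 1 - \sum_(j < k.+1) alpha (lift ord0 j).
  by rewrite -hsum big_ord_recl addrK.
have h1 : alpha ord0 < 1 by rewrite e; lra.
have hq : 0 < 1 - alpha ord0 by lra.
split.
- by rewrite hpos h1.
- by move=> j; apply: divr_gt0.
- rewrite -mulr_suml; have -> : 1 - alpha ord0 = \sum_(j < k.+1) alpha (lift ord0 j) by rewrite e; ring.
  by rewrite divff // gt_eqF.
Qed.

Lemma Fk_mass {R : realType} k (alpha : 'I_k.+1 -> R) B m h : (m <= B)%N ->
  (forall j, 0 < alpha j) -> \sum_j alpha j = 1 -> Fk k.+1 B m alpha 1 h = 1.
Proof.
elim: k alpha B m h => [|k IH] alpha B m h hm hpos hsum.
  by rewrite Fk1 //; move: hsum; rewrite big_ord1 => ->; rewrite expr1n.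
have [/andP [hp0 hp1] hpos' hsum'] := @valid_tail R k alpha hpos hsum.
rewrite Fk_dec; last by rewrite lt_eqF.
rewrite (eq_bigr (fun x : 'I_B.+1 => bb (alpha ord0) m x)); last first.
  move=> x _; rewrite modeq1 mul1r IH ?mulr1 //; apply: leq_trans hm; apply: leq_subr.
rewrite (sum_widen B m (fun x => bb (alpha ord0) m x)) //; last by move=> x hx; rewrite bb_out.
by apply: S1; rewrite hp0 hp1.
Qed.

Lemma Fk_bound {R : realType} k (alpha : 'I_k.+1 -> R) : (forall j, 0 < alpha j) -> \sum_j alpha j = 1 ->
  exists C : R, 0 <= C /\ forall B m d h, (m <= B)%N -> (0 < d)%N ->
    `|Fk k.+1 B m alpha d h - 1 / (d%:R) ^+ k| <= C / Num.sqrt (m.+1)%:R.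
Proof.
elim: k alpha => [|k IH] alpha hpos hsum.
  exists 0; split => // B m d h hm hd.
  rewrite Fk1 //; move: hsum; rewrite big_ord1 => ->.
  by rewrite expr1n expr0 divr1 subrr normr0 mul0r.
have [/andP [hp0 hp1] hpos' hsum'] := @valid_tail R k alpha hpos hsum.
have [C' [hC'0 hC']] := IH _ hpos' hsum'.
have hp : 0 < alpha ord0 < 1 by rewrite hp0 hp1.
have hq : 0 < 1 - alpha ord0 by lra.
exists (C' / (1 - alpha ord0) + 1 / (alpha ord0 * (1 - alpha ord0))); split.
  apply: addr_ge0; apply: divr_ge0 => //; [apply: ltW | apply: mulr_ge0; apply: ltW] => //.
move=> B m d h hm hd.
have hc : 0 < Num.sqrt (m.+1)%:R :> R by rewrite sqrtr_gt0 ltr0n.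
have hr : (`|(h ord0 %% d%:Z)%Z|%N < d)%N by apply: rlt.
have hdR : 0 < d%:R :> R by rewrite ltr0n.
have hc'0 : 0 <= 1 / (d%:R) ^+ k :> R by apply: divr_ge0 => //; apply: exprn_ge0; apply: ltW.
have hc'1 : 1 / (d%:R) ^+ k <= 1 :> R.
  by rewrite ler_pdivrMr ?exprn_gt0 // mul1r; apply: exprn_ege1; rewrite ler1n.
rewrite Fk_dec; last by rewrite lt_eqF.
pose F' := fun x : nat => Fk k.+1 B (m - x) (fun j => alpha (lift ord0 j) / (1 - alpha ord0)) d (fun a => h (lift ord0 a)).
pose ind := fun x : nat => (((x %% d)%N == `|(h ord0 %% d%:Z)%Z|%N) : nat)%:R : R.
rewrite (eq_bigr (fun x : 'I_B.+1 => ind x * bb (alpha ord0) m x * F' x)); last first.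
  by move=> x _; rewrite cong_nat.
rewrite (sum_widen B m (fun x => ind x * bb (alpha ord0) m x * F' x)) //; last first.
  by move=> x hx; rewrite bb_out // mulr0 mul0r.
have e1 : \sum_(x < m.+1) ind x * bb (alpha ord0) m x * (F' x - 1 / (d%:R) ^+ k) =
   \sum_(x < m.+1) ind x * bb (alpha ord0) m x * F' x - 1 / (d%:R) ^+ k * \sum_(x < m.+1) bb (alpha ord0) m x * ind x.
  by rewrite mulr_sumr -sumrB; apply: eq_bigr => x _; ring.
have E : \sum_(x < m.+1) ind x * bb (alpha ord0) m x * F' x - 1 / d%:R ^+ k.+1 =
   \sum_(x < m.+1) ind x * bb (alpha ord0) m x * (F' x - 1 / (d%:R) ^+ k) +
   1 / (d%:R) ^+ k * (\sum_(x < m.+1) bb (alpha ord0) m x * ind x - 1 / d%:R).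
  rewrite e1 exprS; field; by rewrite expf_neq0 // gt_eqF.
rewrite E; apply: le_trans (ler_normD _ _) _.
have P1 : `|\sum_(x < m.+1) ind x * bb (alpha ord0) m x * (F' x - 1 / (d%:R) ^+ k)| <=
          C' / ((1 - alpha ord0) * Num.sqrt (m.+1)%:R).
  apply: le_trans (ler_norm_sum _ _ _) _.
  apply: le_trans (_ : \sum_(x < m.+1) C' * (bb (alpha ord0) m x / Num.sqrt ((m - x).+1)%:R) <= _).
    apply: ler_sum => x _.
    have hx : (m - x <= B)%N by apply: leq_trans hm; apply: leq_subr.
    have hb := bb_ge0 (alpha ord0) hp m x.
    have hi0 : 0 <= ind x by rewrite /ind ler0n.
    have hi1 : ind x <= 1 by rewrite /ind; case: (_ == _); rewrite /= ?mulr1n ?mulr0n ?ler01 ?lexx.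
    have hF := hC' B (m - x)%N d (fun a => h (lift ord0 a)) hx hd.
    rewrite normrM normrM (ger0_norm hi0) (ger0_norm hb).
    apply: le_trans (_ : 1 * bb (alpha ord0) m x * (C' / Num.sqrt ((m - x).+1)%:R) <= _).
      apply: ler_pM => //; first by apply: mulr_ge0.
      by apply: ler_wpM2r.
    by apply: le_of_eq; rewrite mul1r; ring.
  rewrite -mulr_sumr.
  have := Ebound (alpha ord0) hp m => hE.
  apply: le_trans (ler_wpM2l hC'0 hE) _.
  by apply: le_of_eq; field; rewrite !gt_eqF.
have P2 : `|1 / (d%:R) ^+ k * (\sum_(x < m.+1) bb (alpha ord0) m x * ind x - 1 / d%:R)| <=
          1 / (alpha ord0 * (1 - alpha ord0) * Num.sqrt (m.+1)%:R).
  rewrite normrM (ger0_norm hc'0).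
  apply: le_trans (ler_piMl _ hc'1) _; first by apply: normr_ge0.
  exact: (BL (alpha ord0) hp m d _ hd hr).
apply: le_trans (lerD P1 P2) _.
apply: le_of_eq; field; by rewrite !gt_eqF.
Qed.

Definition Esum {R : realType} (q k B : nat) (i : 'I_q -> nat) (alpha : 'I_q -> 'I_k -> R) (d : nat) (g : 'I_k.-1 -> int) : R :=
  \sum_(s : {ffun 'I_q -> {ffun 'I_k -> 'I_B.+1}} |
              [forall t, (\sum_(j < k) (s t j : nat))%N == i t] &&
              [forall a : 'I_k.-1,
                 ((\sum_(t < q) (s t (widen_ord (leq_pred k) a) : nat))%:Z
                    == g a %[mod (d%:Z)])%Z])
            \prod_(t < q) Pmult (i t) (fun j => (s t j : nat)) (alpha t).

Lemma mixture {R : realType} {I : finType} (P : pred I) (w v : I -> R) (c e : R) :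
  (forall x, P x -> 0 <= w x) -> \sum_(x | P x) w x = 1 -> (forall x, P x -> `|v x - c| <= e) ->
  `|\sum_(x | P x) w x * v x - c| <= e.
Proof.
move=> hw h1 hv.
have E : \sum_(x | P x) w x * (v x - c) = \sum_(x | P x) w x * v x - c.
  rewrite (eq_bigr (fun x => w x * v x - w x * c)) => [|x _]; last by rewrite mulrBr.
  by rewrite sumrB -mulr_suml h1 mul1r.
rewrite -E.
apply: le_trans (ler_norm_sum _ _ _) _.
apply: le_trans (_ : \sum_(x | P x) w x * e <= _).
  apply: ler_sum => x hx; rewrite normrM (ger0_norm (hw x hx)).
  by apply: ler_wpM2l; [apply: hw | apply: hv].
by rewrite -mulr_suml h1 mul1r.
Qed.

Lemma modshift1 (X Y g : int) d : ((X + Y == g %[mod d])%Z) = ((Y == g - X %[mod d])%Z).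
Proof. by rewrite -{1}(subrK X g) (addrC X) eqz_modDr. Qed.

Lemma modshift2 (X Y g : int) d : ((X + Y == g %[mod d])%Z) = ((X == g - Y %[mod d])%Z).
Proof. by rewrite -{1}(subrK Y g) eqz_modDr. Qed.

Lemma Eq_dec {R : realType} q k B i (alpha : 'I_q.+1 -> 'I_k -> R) d g :
  Esum q.+1 k B i alpha d g =
  \sum_(x : {ffun 'I_k -> 'I_B.+1}) \sum_(s : {ffun 'I_q -> {ffun 'I_k -> 'I_B.+1}})
    (if [&& ((\sum_(j < k) (x j : nat))%N == i ord0),
            [forall t, (\sum_(j < k) (s t j : nat))%N == i (lift ord0 t)] &
            [forall a : 'I_k.-1, (((x (widen_ord (leq_pred k) a) : nat))%:Z +
                ((\sum_(t < q) (s t (widen_ord (leq_pred k) a) : nat))%:Z) == g a %[mod (d%:Z)])%Z]]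
     then Pmult (i ord0) (fun j => (x j : nat)) (alpha ord0) *
          \prod_(t < q) Pmult (i (lift ord0 t)) (fun j => (s t j : nat)) (alpha (lift ord0 t))
     else 0).
Proof.
rewrite /Esum big_mkcond sum_ffunS; apply: eq_bigr => x _; apply: eq_bigr => s _.
rewrite forall_ordS fcons0 -andbA.
have -> : [forall a : 'I_q, (\sum_(j < k) (fcons x s (lift ord0 a) j : nat))%N == i (lift ord0 a)] =
          [forall t, (\sum_(j < k) (s t j : nat))%N == i (lift ord0 t)].
  by apply: eq_forallb => t; rewrite fconsS.
have -> : [forall a : 'I_k.-1, ((\sum_(t < q.+1) (fcons x s t (widen_ord (leq_pred k) a) : nat))%:Z == g a %[mod (d%:Z)])%Z] =
   [forall a : 'I_k.-1, (((x (widen_ord (leq_pred k) a) : nat))%:Z +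
                ((\sum_(t < q) (s t (widen_ord (leq_pred k) a) : nat))%:Z) == g a %[mod (d%:Z)])%Z].
  apply: eq_forallb => a; rewrite big_ord_recl fcons0 PoszD; congr (_ + _ == _ %[mod _])%Z.
  by congr (Posz _); apply: eq_bigr => t _; rewrite fconsS.
case: ifP => // _.
rewrite big_ord_recl fcons0; congr (_ * _); apply: eq_bigr => t _; by rewrite fconsS.
Qed.

Lemma Eq_form1 {R : realType} q k B i (alpha : 'I_q.+1 -> 'I_k -> R) d g :
  Esum q.+1 k B i alpha d g = \sum_(x : {ffun 'I_k -> 'I_B.+1} | (\sum_(j < k) (x j : nat))%N == i ord0)
     Pmult (i ord0) (fun j => (x j : nat)) (alpha ord0) *
     Esum q k B (fun t => i (lift ord0 t)) (fun t => alpha (lift ord0 t)) d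
        (fun a => g a - ((x (widen_ord (leq_pred k) a) : nat))%:Z).
Proof.
rewrite Eq_dec [RHS]big_mkcond; apply: eq_bigr => x _.
case: ifP => hx /=; last by apply: big1.
rewrite /Esum mulr_sumr [RHS]big_mkcond; apply: eq_bigr => s _.
have -> : [forall a : 'I_k.-1, (((x (widen_ord (leq_pred k) a) : nat))%:Z +
                ((\sum_(t < q) (s t (widen_ord (leq_pred k) a) : nat))%:Z) == g a %[mod (d%:Z)])%Z] =
          [forall a : 'I_k.-1, (((\sum_(t < q) (s t (widen_ord (leq_pred k) a) : nat))%:Z) ==
                g a - ((x (widen_ord (leq_pred k) a) : nat))%:Z %[mod (d%:Z)])%Z].
  by apply: eq_forallb => a; rewrite modshift1.
by case: ifP => _; rewrite ?mulr0.
Qed.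

Lemma Eq_form2 {R : realType} q k B i (alpha : 'I_q.+1 -> 'I_k -> R) d g :
  Esum q.+1 k B i alpha d g =
  \sum_(s : {ffun 'I_q -> {ffun 'I_k -> 'I_B.+1}} | [forall t, (\sum_(j < k) (s t j : nat))%N == i (lift ord0 t)])
   (\prod_(t < q) Pmult (i (lift ord0 t)) (fun j => (s t j : nat)) (alpha (lift ord0 t))) *
   Fk k B (i ord0) (alpha ord0) d
     (fun a => g a - ((\sum_(t < q) (s t (widen_ord (leq_pred k) a) : nat))%:Z)).
Proof.
rewrite Eq_dec exchange_big [RHS]big_mkcond; apply: eq_bigr => s _.
case: ifP => hs /=; last by apply: big1 => x _; rewrite ?andbF.
rewrite /Fk mulr_sumr [RHS]big_mkcond; apply: eq_bigr => x _.
have -> : [forall a : 'I_k.-1, (((x (widen_ord (leq_pred k) a) : nat))%:Z +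
                ((\sum_(t < q) (s t (widen_ord (leq_pred k) a) : nat))%:Z) == g a %[mod (d%:Z)])%Z] =
          [forall a : 'I_k.-1, (((x (widen_ord (leq_pred k) a) : nat))%:Z ==
                g a - ((\sum_(t < q) (s t (widen_ord (leq_pred k) a) : nat))%:Z) %[mod (d%:Z)])%Z].
  by apply: eq_forallb => a; rewrite modshift2.
by case: ifP => _; rewrite ?mulr0 // mulrC.
Qed.

Lemma Fk_d1 {R : realType} k B m (alpha : 'I_k -> R) h :
  Fk k B m alpha 1 h = \sum_(u : {ffun 'I_k -> 'I_B.+1} | (\sum_(j < k) (u j : nat))%N == m)
      Pmult m (fun j => (u j : nat)) alpha.
Proof.
apply: eq_bigl => u.
have -> : [forall a : 'I_k.-1, (((u (widen_ord (leq_pred k) a) : nat))%:Z == h a %[mod ((1%N)%:Z)])%Z] = true.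
  by apply/forallP => a; rewrite modeq1.
by rewrite andbT.
Qed.

Lemma Eq_d1 {R : realType} q k B i (alpha : 'I_q -> 'I_k -> R) g :
  Esum q k B i alpha 1 g = \sum_(s : {ffun 'I_q -> {ffun 'I_k -> 'I_B.+1}} |
              [forall t, (\sum_(j < k) (s t j : nat))%N == i t])
            \prod_(t < q) Pmult (i t) (fun j => (s t j : nat)) (alpha t).
Proof.
apply: eq_bigl => s.
have -> : [forall a : 'I_k.-1, ((\sum_(t < q) (s t (widen_ord (leq_pred k) a) : nat))%:Z
                    == g a %[mod ((1%N)%:Z)])%Z] = true.
  by apply/forallP => a; rewrite modeq1.
by rewrite andbT.
Qed.

Lemma Eq_mass {R : realType} k B q (i : 'I_q -> nat) (alpha : 'I_q -> 'I_k -> R) g :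
  (forall t, (i t <= B)%N) -> (forall t m h, (m <= B)%N -> Fk k B m (alpha t) 1 h = 1) ->
  Esum q k B i alpha 1 g = 1.
Proof.
elim: q i alpha g => [|q IH] i alpha g hi hm.
  rewrite Eq_d1 (big_pred1 [ffun=> [ffun=> ord0]]); first by rewrite big_ord0.
  move=> s; rewrite forall_ord0; symmetry; apply/eqP/ffunP => -[] m0 hm0; by have := hm0; rewrite ltn0.
rewrite Eq_form1.
have E : forall x : {ffun 'I_k -> 'I_B.+1},
    Esum q k B (fun t => i (lift ord0 t)) (fun t => alpha (lift ord0 t)) 1
        (fun a => g a - ((x (widen_ord (leq_pred k) a) : nat))%:Z) = 1.
  move=> x; apply: IH.
  - by move=> t; apply: hi.
  - by move=> t m0 h0 hmB; apply: hm.
under eq_bigr => x _ do rewrite E mulr1.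
by rewrite -(Fk_d1 _ _ _ _ (fun _ => 0)); apply: hm.
Qed.

Lemma Eq_bound {R : realType} k B d (C : R) q (i : 'I_q -> nat) (alpha : 'I_q -> 'I_k -> R) g (t0 : 'I_q) :
  (forall t, (i t <= B)%N) -> (forall t j, 0 <= alpha t j) ->
  (forall t m h, (m <= B)%N -> Fk k B m (alpha t) 1 h = 1) ->
  (forall t m h, (m <= B)%N -> `|Fk k B m (alpha t) d h - 1 / (d%:R) ^+ k.-1| <= C / Num.sqrt (m.+1)%:R) ->
  `|Esum q k B i alpha d g - 1 / (d%:R) ^+ k.-1| <= C / Num.sqrt ((i t0).+1)%:R.
Proof.
elim: q i alpha g t0 => [|q IH] i alpha g t0 hi ha hm hb; first by case: t0.
case: (unliftP ord0 t0) => [t'|] ->.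
- rewrite Eq_form1; apply: mixture.
  + by move=> x _; apply: Pmult_ge0.
  + by rewrite -(hm ord0 (i ord0) (fun _ => 0) (hi ord0)) Fk_d1.
  + move=> x _; apply: IH => t; [apply: hi | apply: ha | apply: hm | apply: hb].
- rewrite Eq_form2; apply: mixture.
  + by move=> s _; apply: prodr_ge0 => t _; apply: Pmult_ge0.
  + have h1 := @Eq_mass R k B q (fun t => i (lift ord0 t)) (fun t => alpha (lift ord0 t)) (fun _ => 0) (fun t => hi _) (fun t => hm _).
    by rewrite Eq_d1 in h1.
  + by move=> s _; apply: hb.
Qed.

Lemma ln_ge1 {R : realType} (n : nat) : (4 <= n)%N -> 1 <= ln (n%:R : R).
Proof.
move=> hn.
have h2 : (2 : R) \is Num.pos by rewrite posrE.
have hl2 : 1 / 2 <= ln (2 : R).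
  have := @le_ln1Dx R (- (1 / 2)) ltac:(lra).
  have -> : 1 + - (1 / 2) = (2 : R)^-1 by field.
  rewrite lnV //; lra.
have h4 : ln (4 : R) = ln 2 + ln 2 by rewrite -lnM // ?posrE //; congr ln; field.
apply: le_trans (_ : ln (4 : R) <= _); first lra.
rewrite ler_ln ?posrE ?ltr0n //; last by apply: leq_trans hn.
by rewrite ler_nat.
Qed.

Lemma final_ineq {R : realType} (C : R) (q n a : nat) : 0 <= C -> (4 <= n)%N -> (n <= q * a)%N ->
  C / Num.sqrt (a%:R) <= C * Num.sqrt q%:R * ln n%:R / Num.sqrt n%:R.
Proof.
move=> hC hn hqa.
have ha : (0 < a)%N by move: hqa; case: a hn => //; rewrite muln0; case: n.
have hsa : 0 < Num.sqrt (a%:R) :> R by rewrite sqrtr_gt0 ltr0n.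
have hsn : 0 < Num.sqrt (n%:R) :> R by rewrite sqrtr_gt0 ltr0n; apply: leq_trans hn.
have hsq : 0 <= Num.sqrt (q%:R) :> R by apply: sqrtr_ge0.
have hln : 1 <= ln (n%:R : R) by apply: ln_ge1.
have h1 : 1 / Num.sqrt (a%:R) <= Num.sqrt q%:R / Num.sqrt n%:R :> R.
  rewrite ler_pdivrMr // mulrAC ler_pdivlMr // mul1r -sqrtrM ?ler0n // ler_sqrt ?ler0n //.
  by rewrite -natrM ler_nat.
have h2 : Num.sqrt q%:R / Num.sqrt n%:R <= Num.sqrt q%:R * ln n%:R / Num.sqrt n%:R :> R.
  by apply: ler_wpM2r; [rewrite invr_ge0 ltW | apply: ler_peMr].
have := ler_wpM2l hC (le_trans h1 h2).
rewrite mul1r => h; apply: le_trans h _; apply: le_of_eq; ring.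
Qed.

Theorem lemma2p4 (R : realType) (q k : nat) (alpha : 'I_q -> 'I_k -> R) :
  (1 <= q)%N -> (2 <= k)%N ->
  (forall t j, 0 < alpha t j < 1) ->
  (forall t, \sum_(j < k) alpha t j = 1) ->
  exists (C : R) (N : nat),
    forall (n d : nat) (g : 'I_k.-1 -> int) (i : 'I_q -> nat),
      (N <= n)%N -> (1 <= d)%N ->
      (forall t, i t <= n)%N ->
      (\sum_(t < q) i t)%N = n ->
      `| \sum_(s : {ffun 'I_q -> {ffun 'I_k -> 'I_n.+1}} |
              [forall t, (\sum_(j < k) (s t j : nat))%N == i t] &&
              [forall a : 'I_k.-1,
                 ((\sum_(t < q) (s t (widen_ord (leq_pred k) a) : nat))%:Z
                    == g a %[mod (d%:Z)])%Z])
            \prod_(t < q) Pmult (i t) (fun j => (s t j : nat)) (alpha t)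
         - 1 / (d%:R) ^+ k.-1 |
      <= C * ln (n%:R) / Num.sqrt (n%:R).
Proof.
move=> hq hk hal hsum.
case: k alpha hk hal hsum => [|k] alpha hk hal hsum; first by [].
have hpos : forall t j, 0 < alpha t j by move=> t j; case/andP: (hal t j).
have hb : forall t : 'I_q, exists C : R, 0 <= C /\ forall B m d h, (m <= B)%N -> (0 < d)%N ->
    `|Fk k.+1 B m (alpha t) d h - 1 / (d%:R) ^+ k| <= C / Num.sqrt (m.+1)%:R.
  by move=> t; apply: Fk_bound; [apply: hpos | apply: hsum].
have [Cf hCf] := fin_all_exists hb.
have hC0 : 0 <= \sum_(t < q) Cf t by apply: sumr_ge0 => t _; case: (hCf t).
have hCt : forall t, Cf t <= \sum_(t < q) Cf t.
  move=> t; rewrite (bigD1 t) //=; apply: ler_wpDr => //.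
  by apply: sumr_ge0 => t' _; case: (hCf t').
exists ((\sum_(t < q) Cf t) * Num.sqrt q%:R), 4%N.
move=> n d g i hn hd hi hsumi.
have [t0 ht0] : exists t0 : 'I_q, (n <= q * i t0)%N.
  case: (boolP [exists t0 : 'I_q, (n <= q * i t0)%N]) => [/existsP // | /existsPn H].
  exfalso.
  have : (\sum_(t < q) q * i t <= \sum_(t < q) n.-1)%N.
    apply: leq_sum => t _; have := H t; rewrite -ltnNge => h.
    by rewrite -ltnS prednK //; apply: leq_trans hn.
  rewrite -big_distrr /= hsumi sum_nat_const card_ord => h.
  have : (q * n <= q * n.-1)%N := h.
  rewrite leq_pmul2l //; move: hn; lia.
have hsq : forall m : nat, 0 <= (Num.sqrt (m.+1)%:R : R)^-1.
  by move=> m; rewrite invr_ge0; apply: sqrtr_ge0.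
have key := @Eq_bound R k.+1 n d (\sum_(t < q) Cf t) q i alpha g t0 hi
  (fun t j => ltW (hpos t j))
  (fun t m h hm => @Fk_mass R k (alpha t) n m h hm (hpos t) (hsum t))
  (fun t m h hm => le_trans (proj2 (hCf t) n m d h hm hd)
        (ler_wpM2r (hsq m) (hCt t))).
apply: le_trans key _.
apply: final_ineq => //; apply: (leq_trans ht0); by rewrite leq_mul2l leqnSn orbT.
Qed.
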